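(* Let $n,k$ be integers with $2<2k\le n$ such that $\mathrm{Pet}(n,k)$ is not bipartite (equivalently, it is not the case that $n$ is even and $k$ is odd). Write $d=\gcd(n,k)$ and define the index set $$\mathrm{Ind}(n,k)=\begin{cases}\{t \mid t \text{ odd},\ 0\le t\le \min\{\tfrac{2k}{d},\ \lfloor\tfrac{(k-1)^2}{n}\rfloor+1\}\} & \text{if } k \text{ and } n \text{ are odd},\\ \{t\in\mathbb{Z} \mid 0<t\le \min\{\tfrac{2k}{d},\ \lfloor\tfrac{(k-1)^2}{n}\rfloor\}\} & \text{if } \tfrac{n}{d} \text{ is odd and } k \text{ is even},\\ \{t\in\mathbb{Z} \mid 0<t\le \min\{\tfrac{k}{d},\ \lfloor\tfrac{(k-1)^2}{n}\rfloor\}\} & \text{if } \tfrac{n}{d} \text{ and } k \text{ are even},\end{cases}$$ and $$\mathcal{G}=\bigcup_{t\in \mathrm{Ind}(n,k)}\Big\{\,tn+(1-k)\lfloor \tfrac{tn}{k}\rfloor+2,\ \ (1+k)\lceil \tfrac{tn}{k}\rceil-tn+2\,\Big\}.$$ Then, with $\mathbb{O}$ the set of odd integers, $$g_{odd}(\mathrm{Pet}(n,k))=\min\Big(\big(\{\tfrac{n}{d},\ k+3\}\cup\mathcal{G}\big)\cap\mathbb{O}\Big).$$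
   Context: For integers $n,k$ with $2<2k\le n$, the generalized Petersen graph $\mathrm{Pet}(n,k)$ has vertex set $\{u_0,\dots,u_{n-1}\}\cup\{v_0,\dots,v_{n-1}\}$ and edge set $\{u_iu_{i+1}\}\cup\{u_iv_i\}\cup\{v_iv_{i+k}\}$, $i\in\{0,\dots,n-1\}$, with indices taken modulo $n$. For a non-bipartite graph $G$, the odd girth $g_{odd}(G)$ is the length of a shortest odd cycle of $G$. *)

(* Defs.v *)
From HB Require Import structures.
From mathcomp Require Import all_boot all_order all_algebra.
Set Implicit Arguments. Unset Strict Implicit. Unset Printing Implicit Defensive.
Import Order.TTheory GRing.Theory Num.Theory.

(* Vertices of Pet(n,k): (false, i) = u_i (outer), (true, i) = v_i (inner). *)
Definition pet_vertex (n : nat) := (bool * 'I_n)%type.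

Definition petE (n k : nat) : rel (pet_vertex n) :=
  fun x y =>
    match x, y with
    | (false, i), (false, j) =>
        ((val i).+1 %% n == val j) || ((val j).+1 %% n == val i)
    | (true, i), (true, j) =>
        ((val i + k) %% n == val j) || ((val j + k) %% n == val i)
    | (false, i), (true, j) => val i == val j
    | (true, i), (false, j) => val i == val j
    end.

Definition is_graph_cycle (T : eqType) (e : rel T) (c : seq T) : Prop :=
  2 < size c /\ ucycle e c.

Definition is_least_nat (P : nat -> Prop) (L : nat) : Prop :=
  P L /\ forall x, P x -> L <= x.
Definition is_least_int (P : int -> Prop) (L : int) : Prop :=
  P L /\ forall x, P x -> (L <= x)%R.

Definition odd_cycle_length (n k : nat) (L : nat) : Prop :=
  exists c : seq (pet_vertex n), @is_graph_cycle _ (@petE n k) c /\ size c = L /\ odd L.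

Definition ceil_div (a b : nat) : nat := a %/ b + ~~ (b %| a).

Definition Ind (n k t : nat) : bool :=
  let d := gcdn n k in
  if odd k && odd n then
    odd t && (t <= minn (2 * k %/ d) ((k - 1) ^ 2 %/ n + 1))
  else if odd (n %/ d) && ~~ odd k then
    (0 < t) && (t <= minn (2 * k %/ d) ((k - 1) ^ 2 %/ n))
  else if ~~ odd (n %/ d) && ~~ odd k then
    (0 < t) && (t <= minn (k %/ d) ((k - 1) ^ 2 %/ n))
  else false.

Definition in_G (n k : nat) (x : int) : Prop :=
  exists t : nat, Ind n k t /\
    (x = (Posz (t * n) + (1 - Posz k) * Posz ((t * n) %/ k) + 2)%R \/
     x = ((1 + Posz k) * Posz (ceil_div (t * n) k) - Posz (t * n) + 2)%R).

Definition candidate (n k : nat) (x : int) : Prop :=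
  (x = Posz (n %/ gcdn n k) \/ x = Posz (k + 3) \/ in_G n k x) /\ ~~ (2 %| x)%Z.

(* Main.v *)
Require Import Defs.
From HB Require Import structures.
From mathcomp Require Import all_boot all_order all_algebra zify.
From Stdlib Require Import Classical.
Set Implicit Arguments. Unset Strict Implicit. Unset Printing Implicit Defensive.
Lemma dup_split (T : eqType) (s : seq T) :
  ~~ uniq s -> exists s1 x s2 s3, s = s1 ++ x :: s2 ++ x :: s3.
Proof.
elim: s => [//|y s IH] /=; rewrite negb_and negbK; case/orP.
  case/splitPr=> s2 s3; by exists [::], y, s2, s3.
move/IH=> [s1 [x [s2 [s3 ->]]]]; by exists (y :: s1), x, s2, s3.
Qed.

Lemma odd_walk_cycle (T : eqType) (e : rel T) :
  (forall x, ~~ e x x) -> forall c, cycle e c -> odd (size c) ->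
  exists c', is_graph_cycle e c' /\ odd (size c') /\ size c' <= size c.
Proof.
move=> irr c; have [N] := ubnP (size c); elim: N c => // N IH c hN hc ho.
case hu: (uniq c).
  exists c; split; last by split.
  split; last by rewrite /ucycle hc hu.
  case: c hN hc ho hu => [//|x [|y [|z p]]] //= _; by rewrite (negbTE (irr x)).
move/negbT: hu => /dup_split [s1 [x [s2 [s3 hc']]]].
have hr : cycle e (x :: s2 ++ x :: (s3 ++ s1)).
  by move: hc; rewrite -(rot_cycle (size s1)) hc' rot_size_cat /= -catA.
rewrite /= rcons_cat /= cat_path /= rcons_path in hr.
case/and4P: hr => h1 h2 h3 h4.
have c1 : cycle e (x :: s2) by rewrite /= rcons_path h1 h2.
have c2 : cycle e (x :: (s3 ++ s1)) by rewrite /= rcons_path h3 h4.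
have hs : size c = (size (x :: s2) + size (x :: (s3 ++ s1)))%N.
  rewrite hc' /= !size_cat /= !size_cat /=; lia.
case ho1: (odd (size (x :: s2))).
  have [c' [g1 [g2 g3]]] := IH (x :: s2) ltac:(simpl in *; lia) c1 ho1.
  exists c'; split=> //; split=> //; simpl in *; lia.
have ho2 : odd (size (x :: (s3 ++ s1))) by move: ho; rewrite hs oddD ho1.
have [c' [g1 [g2 g3]]] := IH (x :: (s3 ++ s1)) ltac:(simpl in *; lia) c2 ho2.
exists c'; split=> //; split=> //; simpl in *; lia.
Qed.

Lemma least_exists (P : nat -> Prop) : (exists m, P m) -> exists g, is_least_nat P g.
Proof.
move=> [m Pm]; apply: NNPP => H.
suff : forall j, ~ P j by move/(_ m).
have H' : forall g, P g -> exists x, P x /\ (x < g)%N.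
  move=> g Pg; apply: NNPP => Hn; apply: H; exists g; split=> // x Px.
  case: (leqP g x) => // hx; case: Hn; by exists x.
move=> j; have [N] := ubnP j; elim: N j => // N IH j hj Pj.
have [x [Px hx]] := H' j Pj; apply: (IH x) => //; lia.
Qed.

Import Order.TTheory GRing.Theory Num.Theory.

Definition vx n (np : 0 < n) (b : bool) (i : nat) : pet_vertex n :=
  (b, Ordinal (ltn_pmod i np)).

Lemma petE_sym n k x y : @petE n k x y = @petE n k y x.
Proof. by case: x y => [[] i] [[] j] /=; first [rewrite orbC | rewrite eq_sym]. Qed.

Lemma modn_2 x n : n <= x < n + n -> x %% n = x - n.
Proof.
move=> /andP [h1 h2]; rewrite -{1}(subnK h1) modnDr modn_small //; lia.
Qed.

Lemma petE_irr n k x : 1 < n -> 0 < k < n -> ~~ @petE n k x x.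
Proof.
move=> hn /andP [hk1 hk2]; case: x => [[] [i hi]]; rewrite /petE /= orbb.
  case: (ltnP (i + k) n) => h; first by rewrite modn_small //; lia.
  rewrite modn_2; lia.
case: (ltnP i.+1 n) => h; first by rewrite modn_small //; lia.
have -> : i.+1 = n by lia.
rewrite modnn; lia.
Qed.

Lemma e_out n k (np : 0 < n) i : @petE n k (vx np false i) (vx np false i.+1).
Proof. by rewrite /petE /= -addn1 modnDml addn1 eqxx. Qed.

Lemma e_in n k (np : 0 < n) c : @petE n k (vx np true c) (vx np true (c + k)).
Proof. by rewrite /petE /= modnDml eqxx. Qed.

Lemma e_sp n k (np : 0 < n) a b : a %% n = b %% n -> @petE n k (vx np false a) (vx np true b).
Proof. by rewrite /petE /= => ->. Qed.

Lemma e_sp' n k (np : 0 < n) a b : a %% n = b %% n -> @petE n k (vx np true b) (vx np false a).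
Proof. by rewrite /petE /= => ->. Qed.

Lemma path_fun (T : Type) (e : rel T) (g : nat -> T) i m :
  (forall j, i <= j -> j < i + m -> e (g j) (g j.+1)) ->
  path e (g i) (map g (iota i.+1 m)) /\ last (g i) (map g (iota i.+1 m)) = g (i + m).
Proof.
elim: m i => [|m IH] i h /=; first by rewrite addn0.
have [h1 h2] := IH i.+1 ltac:(move=> j hj1 hj2; apply: h; lia).
rewrite h1 h2 h //; last lia. split=> //; congr g; lia.
Qed.

Lemma cycle_fun (T : Type) (e : rel T) (g : nat -> T) L : 0 < L ->
  (forall i, i.+1 < L -> e (g i) (g i.+1)) -> e (g L.-1) (g 0) -> cycle e (mkseq g L).
Proof.
case: L => [//|L] _ h hc; rewrite /mkseq /= rcons_path.
have [h1 h2] := path_fun (g := g) (i := 0) (m := L) (e := e) ltac:(move=> j _ hj; apply: h; lia).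
by rewrite h1 h2.
Qed.

Lemma modz_ex a n : exists m : int, Posz (a %% n) = (Posz a + m * Posz n)%R.
Proof.
exists (- Posz (a %/ n))%R; rewrite {2}(divn_eq a n) PoszD PoszM.
by rewrite mulNr addrC addrA addNr add0r.
Qed.

Lemma step_info n k (np : 0 < n) (x y : pet_vertex n) : @petE n k x y ->
  (x.1 = false /\ y.1 = false /\ exists s m : int, (s = 1 \/ s = -1)%R /\
      Posz y.2 = (Posz x.2 + s + m * Posz n)%R)
  \/ (x.1 = true /\ y.1 = true /\ exists s m : int, (s = 1 \/ s = -1)%R /\
      Posz y.2 = (Posz x.2 + Posz k * s + m * Posz n)%R)
  \/ (y.1 = ~~ x.1 /\ nat_of_ord y.2 = x.2).
Proof.
case: x y => [[] [i hi]] [[] [j hj]] /=.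
- case/orP => /eqP h; right; left; split=> //; split=> //.
    have [m hm] := modz_ex (i + k) n; exists 1%R, m; split; first by left.
    rewrite -h hm; lia.
  have [m hm] := modz_ex (j + k) n; exists (-1)%R, (- m)%R; split; first by right.
  move: hm; rewrite h; lia.
- by move/eqP=> h; right; right.
- by move/eqP=> h; right; right.
- case/orP => /eqP h; left; split=> //; split=> //.
    have [m hm] := modz_ex (i.+1) n; exists 1%R, m; split; first by left.
    rewrite -h hm; lia.
  have [m hm] := modz_ex (j.+1) n; exists (-1)%R, (- m)%R; split; first by right.
  move: hm; rewrite h; lia.
Qed.

Lemma path_inv n k (np : 0 < n) x p : path (@petE n k) x p ->
 exists (a b s : nat) (A B m w1 w2 : int),
  size p = a + b + s /\ (- Posz a <= A <= Posz a)%R /\ (Posz a = A + 2 * w1)%R /\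
  (- Posz b <= B <= Posz b)%R /\ (Posz b = B + 2 * w2)%R /\
  (Posz (last x p).2 = Posz x.2 + A + Posz k * B + m * Posz n)%R /\
  (last x p).1 = x.1 (+) odd s /\ (s = 0 -> if x.1 then a = 0 else b = 0).
Proof.
elim: p x => [|y p IH] x /=.
  move=> _; exists 0, 0, 0, 0%R, 0%R, 0%R, 0%R, 0%R; rewrite addbF.
  do 7 (split; first lia); by case: x.1.
case/andP => hxy hp.
have [a [b [s [A [B [m [w1 [w2 [h1 [h2 [h3 [h4 [h5 [h6 [h7 h8]]]]]]]]]]]]]]] := IH y hp.
case: (step_info np hxy) => [[hx [hy [s0 [m0 [hs0 he]]]]] | [[hx [hy [s0 [m0 [hs0 he]]]]] | [hy he]]].
- rewrite hy in h8; rewrite hx; case: hs0 => hs0.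
    exists a.+1, b, s, (A + s0)%R, B, (m + m0)%R, w1, w2.
    do 6 (split; first lia); split; first by rewrite h7 hy.
    by move/h8.
  exists a.+1, b, s, (A + s0)%R, B, (m + m0)%R, (w1 + 1)%R, w2.
  do 6 (split; first lia); split; first by rewrite h7 hy.
  by move/h8.
- rewrite hy in h8; rewrite hx; case: hs0 => hs0.
    exists a, b.+1, s, A, (B + s0)%R, (m + m0)%R, w1, w2.
    do 6 (split; first lia); split; first by rewrite h7 hy.
    by move/h8.
  exists a, b.+1, s, A, (B + s0)%R, (m + m0)%R, w1, (w2 + 1)%R.
  do 6 (split; first lia); split; first by rewrite h7 hy.
  by move/h8.
- exists a, b, s.+1, A, B, m, w1, w2.
  do 6 (split; first lia); split=> //.
  by rewrite h7 hy /= addbN addNb.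
Qed.

Lemma gcd_facts n k : 0 < n ->
  0 < gcdn n k /\ n = (n %/ gcdn n k) * gcdn n k /\ k = (k %/ gcdn n k) * gcdn n k /\
  coprime (n %/ gcdn n k) (k %/ gcdn n k).
Proof.
move=> np; have dp : 0 < gcdn n k by rewrite gcdn_gt0 np.
have hn := esym (divnK (dvdn_gcdl n k)); have hk := esym (divnK (dvdn_gcdr n k)).
do 3 (split=> //).
rewrite /coprime.
have := muln_gcdl (n %/ gcdn n k) (k %/ gcdn n k) (gcdn n k).
rewrite -hn -hk => h.
by rewrite -(eqn_pmul2r dp) h mul1n.
Qed.

Lemma e_dvd n k b : 0 < n -> n %| k * b -> (n %/ gcdn n k) %| b.
Proof.
move=> np; have [dp [hn [hk hc]]] := gcd_facts k np.
move=> h.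
have : (n %/ gcdn n k) * gcdn n k %| ((k %/ gcdn n k) * b) * gcdn n k.
  by rewrite mulnAC -hk -hn.
by rewrite dvdn_pmul2r // Gauss_dvdr.
Qed.

Lemma cyc1 n k (np : 0 < n) a b : n %| a + k * b ->
  exists c, cycle (@petE n k) c /\ size c = a + b + 2.
Proof.
move=> hd.
pose g j := if j <= a then vx np false j else vx np true (a + k * (j - a.+1)).
exists (mkseq g (a + b + 2)); split; last by rewrite size_mkseq.
apply: cycle_fun; first lia.
- move=> i hi; rewrite /g; case: (ltngtP i a) => h.
  + by apply: e_out.
  + 
    have -> : i.+1 - a.+1 = (i - a.+1).+1 by lia.
    rewrite mulnS; move: (k * (i - a.+1)) => X.
    have -> : a + (k + X) = a + X + k by lia.
    exact: e_in.
  + rewrite h subnn muln0 addn0; exact: e_sp.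
- rewrite /g; have -> : (a + b + 2).-1 <= a = false by lia.
  have -> : (a + b + 2).-1 - a.+1 = b by lia.
  apply: e_sp'; rewrite mod0n; apply/esym/eqP; by rewrite -/(dvdn n _).
Qed.

Lemma cyc2 n k (np : 0 < n) a b : a %% n = (k * b) %% n ->
  exists c, cycle (@petE n k) c /\ size c = a + b + 2.
Proof.
move=> hd.
pose g j := if j <= a then vx np false j else vx np true (k * (a + b.+1 - j)).
exists (mkseq g (a + b + 2)); split; last by rewrite size_mkseq.
apply: cycle_fun; first lia.
- move=> i hi; rewrite /g; case: (ltngtP i a) => h.
  + by apply: e_out.
  + 
    have -> : a + b.+1 - i = (a + b.+1 - i.+1).+1 by lia.
    rewrite mulnS; move: (k * (a + b.+1 - i.+1)) => X.
    rewrite petE_sym addnC; exact: e_in.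
  + rewrite h.
    have -> : a + b.+1 - a.+1 = b by lia.
    exact: e_sp.
- rewrite /g; have -> : (a + b + 2).-1 <= a = false by lia.
  have -> : a + b.+1 - (a + b + 2).-1 = 0 by lia.
  by apply: e_sp'; rewrite muln0.
Qed.

Lemma cyc_in n k (np : 0 < n) :
  exists c, cycle (@petE n k) c /\ size c = n %/ gcdn n k.
Proof.
have [dp [hn [hk hc]]] := gcd_facts k np.
set e := n %/ gcdn n k in hn hk hc *; set f := k %/ gcdn n k in hk hc *.
have ep : 0 < e by move: np; rewrite hn muln_gt0 => /andP [].
pose g j := vx np true (k * j).
exists (mkseq g e); split; last by rewrite size_mkseq.
apply: cycle_fun => //.
- by move=> i _; rewrite /g mulnS addnC; apply: e_in.
- rewrite /g /petE /= modnDml muln0 mod0n; apply/orP; left.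
  have -> : k * e.-1 + k = f * n.
    rewrite -mulnSr prednK //; move: hk hn; move: (gcdn n k) => d hk hn; nia.
  by rewrite modnMl.
Qed.

Lemma cyc_lat n k (np : 0 < n) (A B m : int) : (A + Posz k * B = m * Posz n)%R ->
  exists c, cycle (@petE n k) c /\ size c = (`|A| + `|B| + 2)%N.
Proof.
wlog hB : A B m / (0 <= B)%R.
  move=> H h; case: (lerP 0 B) => hB; first exact: (H A B m hB h).
  have [c [h1 h2]] := H (- A)%R (- B)%R (- m)%R ltac:(lia) ltac:(lia).
  by exists c; rewrite h2 !abszN.
case: B hB => [b|b] hB; last by [].
case: A => [a|a] h.
- case: m h => [t|t] h; last by move: h; rewrite NegzE; lia.
  have hn : a + k * b = t * n by lia.
  have [c [h1 h2]] := @cyc1 n k np a b ltac:(by rewrite hn dvdn_mull).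
  by exists c.
- have hmod : a.+1 %% n = (k * b) %% n.
    move: h; rewrite NegzE; case: m => [t|t] h.
      have -> : k * b = t * n + a.+1 by lia.
      by rewrite modnMDl.
    have -> : a.+1 = t.+1 * n + k * b by move: h; rewrite NegzE; lia.
    by rewrite modnMDl.
  have [c [h1 h2]] := @cyc2 n k np a.+1 b hmod.
  by exists c; rewrite h2.
Qed.

Lemma odd_notdvd (v : nat) : odd v -> ~~ (2 %| Posz v)%Z.
Proof. by move=> h; rewrite dvdzE /= dvdn2 h. Qed.

Lemma cand_e n k : odd (n %/ gcdn n k) -> candidate n k (Posz (n %/ gcdn n k)).
Proof. move=> h; split; [by left | exact: odd_notdvd]. Qed.

Lemma cand_k3 n k : ~~ odd k -> candidate n k (Posz (k + 3)).
Proof.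
move=> h; split; first by right; left.
apply: odd_notdvd; rewrite oddD /=; by case: (odd k) h.
Qed.

Lemma cand_v1 n k t v : Ind n k t -> odd v ->
  Posz v = (Posz (t * n) + (1 - Posz k) * Posz ((t * n) %/ k) + 2)%R ->
  candidate n k (Posz v).
Proof.
move=> hI ho hv; split; last exact: odd_notdvd.
by right; right; exists t; split=> //; left.
Qed.

Lemma cand_v2 n k t v : Ind n k t -> odd v ->
  Posz v = ((1 + Posz k) * Posz (ceil_div (t * n) k) - Posz (t * n) + 2)%R ->
  candidate n k (Posz v).
Proof.
move=> hI ho hv; split; last exact: odd_notdvd.
by right; right; exists t; split=> //; right.
Qed.

Lemma arith1 (k t n q r Q b : nat) (A : int) :
  0 < k -> 0 < t ->
  (k - 1) ^ 2 < Q.+1 * n -> Q.+1 * n <= t.-1 * n -> n = q * k + r -> r < k ->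
  (A + Posz k * Posz b.+1 = Posz t * Posz n)%R -> ~~ (k <= `|A|) ->
  k * b.+2 <= k * (q + r) -> k.-1 * r <= k.-1 * k.-1 -> False.
Proof.
case: k => [|k] // _; case: t => [|t] // _; rewrite /= subn1 /=.
move=> h1 h2 h3 h4 h5 h6 h7 h8. nia.
Qed.

Lemma arith2 (k t n Q b : nat) (A : int) :
  0 < k -> ~~ odd k -> (k - 1) ^ 2 < Q.+1 * n -> Q.+1 * n <= t * n ->
  (A + Posz k * Posz b.+1 = Posz t * Posz n)%R -> ~~ (k <= `|A|) -> A <> 0%R ->
  odd `|(A + Posz b.+1)%R| -> k + 3 <= `|A| + b.+1 + 2.
Proof.
case: k => [|k] // _; rewrite /= subn1 /= => ke h1 h2 h h3 h4 h5.
have hb : k <= b.+2.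
  rewrite leqNgt; apply/negP => hlt.
  have : k.+1 * b.+3 <= k.+1 * k by rewrite leq_mul2l hlt orbT.
  nia.
have [hbe|hbg] : b.+2 = k \/ k < b.+2 by lia.
  subst k; nia.
lia.
Qed.

Lemma lattice_core n k e f (Indb : nat -> bool) (C : int -> Prop) :
  2 < 2 * k -> 2 * k <= n -> ~~ (~~ odd n && odd k) ->
  k * e = f * n -> 0 < e -> 0 < f -> (forall b, n %| k * b -> e %| b) ->
  (odd e -> C (Posz e)) -> (~~ odd k -> C (Posz (k + 3))) ->
  (forall t v, Indb t -> odd v ->
     Posz v = (Posz (t * n) + (1 - Posz k) * Posz ((t * n) %/ k) + 2)%R -> C (Posz v)) ->
  (forall t v, Indb t -> odd v ->
     Posz v = ((1 + Posz k) * Posz (ceil_div (t * n) k) - Posz (t * n) + 2)%R -> C (Posz v)) ->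
  (forall t, Indb t =
    if odd k && odd n then odd t && (t <= minn (2 * f) ((k - 1) ^ 2 %/ n + 1))
    else if odd e && ~~ odd k then (0 < t) && (t <= minn (2 * f) ((k - 1) ^ 2 %/ n))
    else if ~~ odd e && ~~ odd k then (0 < t) && (t <= minn f ((k - 1) ^ 2 %/ n))
    else false) ->
  forall A B m : int, (A + Posz k * B = m * Posz n)%R -> odd `|(A + B)%R| ->
  exists x, C x /\ (x <= Posz (`|A| + `|B| + 2))%R.
Proof.
move=> hk1 hk2 hnb hke ep fp hdiv Ce Ck3 Cv1 Cv2 hI A B m.
have np : 0 < n by lia.
have kp : 0 < k by lia.
have [N] := ubnP (`|A| + `|B|)%N; elim: N A B m => // N IH A B m hN h hodd.
wlog hB : A B m hN h hodd / (0 <= B)%R.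
  move=> H; case: (lerP 0 B) => hB; first exact: (H A B m hN h hodd hB).
  have e1 : (`|(- A)%R| + `|(- B)%R| < N.+1)%N by rewrite !abszN.
  have e2 : ((- A) + Posz k * (- B) = (- m) * Posz n)%R by lia.
  have e3 : odd `|((- A) + (- B))%R| by rewrite -opprD abszN.
  have [x [hx1 hx2]] := H (- A)%R (- B)%R (- m)%R e1 e2 e3 ltac:(lia).
  by exists x; split=> //; move: hx2; rewrite !abszN.
have [Abig|Asmall] := boolP (k <= `|A|)%N.
  case: (boolP (odd k)) => ko.
    case: (lerP 0 A) => hA.
      have [x [hx1 hx2]] := IH (A - Posz k)%R (B + 1)%R m ltac:(lia) ltac:(lia) ltac:(lia).
      by exists x; split=> //; lia.
    have [x [hx1 hx2]] := IH (A + Posz k)%R (B - 1)%R m ltac:(lia) ltac:(lia) ltac:(lia).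
    by exists x; split=> //; lia.
  by exists (Posz (k + 3)); split; [exact: Ck3 | lia].
have [Bbig|Bsmall] := boolP (e <= `|B|)%N.
  case: (boolP (odd e)) => eo.
    by exists (Posz e); split; [exact: Ce | lia].
  have hke' : (Posz k * Posz e = Posz f * Posz n)%R by rewrite -!PoszM hke.
  have [x [hx1 hx2]] := IH A (B - Posz e)%R (m - Posz f)%R ltac:(lia) ltac:(lia) ltac:(lia).
  by exists x; split=> //; lia.
case: B h hodd hN hB Bsmall => [b|b] h hodd hN hB Bsmall; last by [].
case: b h hodd hN hB Bsmall => [|b] h hodd hN hB Bsmall.
  have : (m <= -1 \/ m = 0 \/ 1 <= m)%R by lia.
  case=> [hm|[hm|hm]]; [nia | subst m; lia | nia].
have hm1 : (1 <= m)%R by nia.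
case: m h hm1 => [t|t] h hm1; last by move: hm1; rewrite NegzE; lia.
have hA0 : A <> 0%R.
  move=> hA0; subst A.
  have : n %| k * b.+1 by apply/dvdnP; exists t; lia.
  move/hdiv/(dvdn_leq (ltn0Sn b)); simpl in *; lia.
have htf : t < f.
  rewrite ltnNge; apply/negP => htf.
  have h1 : f * n <= t * n by rewrite leq_mul2r htf orbT.
  have h2 : k * b.+1 <= k * e.-1 by rewrite leq_mul2l; apply/orP; right; simpl in *; lia.
  have h3 : k * e.-1 + k = k * e by rewrite -mulnSr prednK.
  simpl in *; lia.
have cand_t : Indb t -> exists x, C x /\ (x <= Posz (`|A| + `|Posz b.+1| + 2))%R.
  move=> hIt; case: (lerP 0 A) => hA.
    case: A hA h hodd hN Asmall hA0 => [a|a] hA h hodd hN Asmall hA0; last by [].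
    have hnat : t * n = b.+1 * k + a by lia.
    exists (Posz (a + b.+1 + 2)); split; last by simpl; lia.
    apply: (Cv1 t) => //; first by simpl in *; lia.
    rewrite hnat divnMDl // divn_small ?addn0; [lia | simpl in *; lia].
  case: A hA h hodd hN Asmall hA0 => [a|a] hA h hodd hN Asmall hA0; first by [].
  have hq : t * n = b * k + (k - a.+1) by move: h; rewrite NegzE; simpl in *; lia.
  have hceil : ceil_div (t * n) k = b.+1.
    rewrite /ceil_div hq divnMDl // divn_small; last by simpl in *; lia.
    rewrite dvdn_addr ?dvdn_mull // gtnNdvd //=; simpl in *; lia.
  exists (Posz (a.+1 + b.+1 + 2)); split; last by rewrite NegzE /=; lia.
  apply: (Cv2 t) => //; first by move: hodd; rewrite NegzE; simpl in *; lia.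
  rewrite hceil; lia.
have [ko|ke] := boolP (odd k).
  have no : odd n by move: hnb; rewrite ko andbT negbK.
  case: (leqP t ((k - 1) ^ 2 %/ n + 1)) => hQ.
    apply: cand_t; rewrite hI ko no /= leq_min hQ andbT.
    apply/andP; split; last by lia.
    have ek : k = 2 * (k %/ 2) + 1 by lia.
    have en : n = 2 * (n %/ 2) + 1 by lia.
    have e1 : t * n = 2 * (t * (n %/ 2)) + t by rewrite {1}en; lia.
    have e2 : k * b.+1 = 2 * ((k %/ 2) * b.+1) + b.+1 by rewrite {1}ek; lia.
    move: hodd h; simpl; lia.
  have c1 := ltn_ceil ((k - 1) ^ 2) np.
  have c2 : ((k - 1) ^ 2 %/ n).+1 * n <= t.-1 * n by rewrite leq_mul2r; apply/orP; right; lia.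
  have hdk := divn_eq n k; have hrk := ltn_pmod n kp.
  have ek : k = 2 * (k %/ 2) + 1 by lia.
  have e3 : n %/ k * k = 2 * (n %/ k * (k %/ 2)) + n %/ k by rewrite {2}ek; lia.
  exists (Posz (n %% k + n %/ k + 2)); split.
    apply: (Cv1 1).
    - rewrite hI ko no /= leq_min addn1 ltnS leq0n andbT; lia.
    - lia.
    - rewrite mul1n; lia.
  suff : n %/ k + n %% k <= b.+1 by simpl; lia.
  rewrite leqNgt; apply/negP => hlt.
  have h3 : k * b.+2 <= k * (n %/ k + n %% k) by rewrite leq_mul2l hlt orbT.
  have h4 : k.-1 * (n %% k) <= k.-1 * k.-1 by rewrite leq_mul2l; apply/orP; right; lia.
  apply: (arith1 (k:=k) (t:=t) (Q := (k-1)^2 %/ n) (q := n %/ k) (r := n %% k) (b:=b) (A:=A) kp _ c1 c2 hdk hrk h Asmall h3 h4); lia.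
case: (leqP t ((k - 1) ^ 2 %/ n)) => hQ.
  apply: cand_t; rewrite hI (negbTE ke) /=; case: (odd e) => /=;
    rewrite leq_min hQ andbT; apply/andP; split; lia.
exists (Posz (k + 3)); split; first exact: Ck3.
have c1 := ltn_ceil ((k - 1) ^ 2) np.
have c2 : ((k - 1) ^ 2 %/ n).+1 * n <= t * n by rewrite leq_mul2r hQ orbT.
have := arith2 kp ke c1 c2 h Asmall hA0 hodd; simpl; lia.
Qed.

Lemma lattice n k (A B m : int) : 2 < 2 * k -> 2 * k <= n -> ~~ (~~ odd n && odd k) ->
  (A + Posz k * B = m * Posz n)%R -> odd `|(A + B)%R| ->
  exists x, candidate n k x /\ (x <= Posz (`|A| + `|B| + 2))%R.
Proof.
move=> hk1 hk2 hnb.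
have np : 0 < n by lia.
have [dp [hn [hk hc]]] := gcd_facts k np.
apply: (@lattice_core n k (n %/ gcdn n k) (k %/ gcdn n k) (Ind n k) (candidate n k)) => //.
- by rewrite (muln_divCA (dvdn_gcdr n k) (dvdn_gcdl n k)) mulnC.
- by have := np; rewrite {1}hn muln_gt0 => /andP [].
- have kp : 0 < k by lia.
  by have := kp; rewrite {1}hk muln_gt0 => /andP [].
- by move=> b; apply: e_dvd.
- exact: cand_e.
- exact: cand_k3.
- by move=> t v; apply: cand_v1.
- by move=> t v; apply: cand_v2.
- by move=> t; rewrite /Ind -(muln_divA 2 (dvdn_gcdr n k)).
Qed.

Lemma ceil_ge a k : 0 < k -> a <= k * ceil_div a k.
Proof.
move=> kp; rewrite /ceil_div {1}(divn_eq a k).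
case: (boolP (k %| a)) => hd /=.
  by move: hd; rewrite /dvdn => /eqP ->; rewrite addn0 addn0 mulnC.
have := ltn_pmod a kp; rewrite mulnDr muln1 mulnC; lia.
Qed.

Lemma odd_of_cand (v : nat) : ~~ (2 %| Posz v)%Z -> odd v.
Proof. by rewrite dvdzE /= dvdn2 negbK. Qed.

Theorem theorem1 (n k : nat) :
  2 < 2 * k -> 2 * k <= n -> ~~ (~~ odd n && odd k) ->
  exists g : nat,
    is_least_nat (odd_cycle_length n k) g /\ is_least_int (candidate n k) (Posz g).
Proof.
move=> hk1 hk2 hnb.
have np : 0 < n by lia.
have kp : 0 < k by lia.
have irr : forall x, ~~ @petE n k x x by move=> x; apply: petE_irr; lia.
have W : forall c, cycle (@petE n k) c -> odd (size c) ->
    exists L, odd_cycle_length n k L /\ L <= size c.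
  move=> c hc ho; have [c' [g1 [g2 g3]]] := odd_walk_cycle irr hc ho.
  by exists (size c'); split=> //; exists c'.
have F2 : forall x, candidate n k x -> exists L, odd_cycle_length n k L /\ (Posz L <= x)%R.
  move=> x [hx hodd]; case: hx => [hx|[hx|[t [hIt hv]]]].
  - subst x; have [c [hc hs]] := cyc_in k np.
    have [L [hL hLs]] := W c hc ltac:(by rewrite hs; apply: odd_of_cand).
    by exists L; split=> //; rewrite -hs; lia.
  - subst x; have [c [hc hs]] := @cyc_lat n k np (- Posz k)%R 1%R 0%R ltac:(lia).
    rewrite abszN /= in hs.
    have [L [hL hLs]] := W c hc ltac:(by rewrite hs; move: (odd_of_cand hodd); lia).
    by exists L; split=> //; lia.
  - have [dq hr] := (divn_eq (t * n) k, ltn_pmod (t * n) kp).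
    have hce := ceil_ge (t * n) kp.
    case: hv => hv.
      have [c [hc hs]] := @cyc_lat n k np (Posz ((t * n) %% k)) (Posz ((t * n) %/ k)) (Posz t) ltac:(lia).
      have hx : x = Posz (size c) by rewrite hs hv /=; lia.
      rewrite hx in hodd.
      have [L [hL hLs]] := W c hc (odd_of_cand hodd).
      by exists L; split=> //; rewrite hx; lia.
    have [c [hc hs]] := @cyc_lat n k np (Posz (t * n) - Posz k * Posz (ceil_div (t * n) k))%R
      (Posz (ceil_div (t * n) k)) (Posz t) ltac:(lia).
    have hx : x = Posz (size c) by rewrite hs hv; lia.
    rewrite hx in hodd.
    have [L [hL hLs]] := W c hc (odd_of_cand hodd).
    by exists L; split=> //; rewrite hx; lia.
have [dp [hn [hk hc]]] := gcd_facts k np.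
have edn : n %/ gcdn n k %| n by apply/dvdnP; exists (gcdn n k); rewrite mulnC; exact: hn.
have F1 : forall L, odd_cycle_length n k L -> exists x, candidate n k x /\ (x <= Posz L)%R.
  move=> L [c [[hs /andP [hcyc huniq]] [hL hoddL]]].
  case: c hs hcyc huniq hL => [//|x p] hs hcyc huniq hL.
  have := path_inv np hcyc; rewrite last_rcons.
  move=> [a [b [s [A [B [m [w1 [w2 [h1 [h2 [h3 [h4 [h5 [h6 [h7 h8]]]]]]]]]]]]]]].
  rewrite size_rcons in h1.
  clear W F2 irr hcyc huniq.
  have hs2 : ~~ odd s by move: h7; case: (x.1); case: (odd s).
  have hL' : L = a + b + s by rewrite -hL /= h1.
  have hAB : (A + Posz k * B = (- m) * Posz n)%R by clear -h6; lia.
  case: (posnP s) => hs0.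
  - move: (h8 hs0); case: (x.1) => hab.
    +
      have hA : A = 0%R by clear -h2 hab; lia.
      have hkB : k * `|B| = `|m| * n.
        have : (Posz k * B = (- m) * Posz n)%R by clear -hAB hA; lia.
        by move/(congr1 absz); rewrite !abszM abszN.
      have hdv : n %/ gcdn n k %| `|B| by apply: e_dvd => //; apply/dvdnP; exists `|m|.
      have hBo : odd `|B| by clear -hoddL hL' hs0 hab h5; lia.
      have hBp : 0 < `|B| by move: hBo; case: (`|B|).
      exists (Posz (n %/ gcdn n k)); split.
        by apply: cand_e; apply: dvdn_odd hdv hBo.
      have := dvdn_leq hBp hdv; clear -h4 hL' hs0 hab; lia.
    +
      have hB : B = 0%R by clear -h4 hab; lia.
      have hAm : `|A| = `|m| * n.
        have : (A = (- m) * Posz n)%R by clear -hAB hB; lia.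
        by move/(congr1 absz); rewrite !abszM abszN.
      have hAo : odd `|A| by clear -hoddL hL' hs0 hab h3; lia.
      have hno : odd n by move: hAo; rewrite hAm oddM => /andP [].
      have hm0 : 0 < `|m| by move: hAo; rewrite hAm; case: (`|m|).
      exists (Posz (n %/ gcdn n k)); split.
        by apply: cand_e; apply: dvdn_odd edn hno.
      have := leq_div n (gcdn n k); have : n <= `|m| * n by rewrite leq_pmull.
      clear -hAm h2 hL' hs0; lia.
  - have hodd2 : odd `|(A + B)%R| by clear -hoddL hL' h3 h5 hs2; lia.
    have [x0 [hx1 hx2]] := lattice hk1 hk2 hnb hAB hodd2.
    by exists x0; split=> //; clear -hx2 h2 h4 hL' hs0 hs2; lia.
have [L0 hL0] : exists L, odd_cycle_length n k L.
  case: (boolP (odd k)) => ko.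
    have hno : odd n by move: hnb; rewrite ko andbT negbK.
    have [L [hL _]] := F2 _ (cand_e (dvdn_odd edn hno)).
    by exists L.
  have [L [hL _]] := F2 _ (cand_k3 n ko).
  by exists L.
have [g [hg1 hg2]] := least_exists (ex_intro _ L0 hL0).
exists g; split; first by split.
split.
  have [x [hx hxg]] := F1 g hg1.
  have [L [hL hLx]] := F2 x hx.
  have := hg2 L hL => hgL.
  have -> : Posz g = x by lia.
  exact: hx.
move=> x hx; have [L [hL hLx]] := F2 x hx; have := hg2 L hL; lia.
Qed.
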